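(* Let $g$ be a polynomial of degree at least one, let $A\subset\mathbb{C}$ be compact, and let $B\subset PH(A)$ satisfy $g(B)\subset B$. Then $B\subset PH(g^{-1}(A))$. In particular, if $g\in G\in\mathcal{G}$ and $P^*(G)\subset PH(A)$ where $A\subset\mathbb{C}$ is compact, then $P^*(G)\subset PH(g^{-1}(A))$.
   Context: For compact $A\subset\mathbb{C}$, the polynomial hull $PH(A)$ is the union of $A$ and all bounded components of $\mathbb{C}\setminus A$. A polynomial semigroup is a semigroup of non-constant complex polynomials (self-maps of $\hat{\mathbb{C}}$) under composition. $P(G)$ is the closure in $\hat{\mathbb{C}}$ of the set of all critical values of all $g\in G$, and $P^*(G)=P(G)\setminus\{\infty\}$. $\mathcal{G}$: polynomial semigroups all of whose elements have degree $\ge2$ and with $P^*(G)$ bounded in $\mathbb{C}$. *)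

(* Defs.v *)
(* The complex plane is R[i] for an
   arbitrary R : realType, viewed as a numClosedFieldType so that it carries
   the (norm = modulus) topology of MathComp-Analysis. *)
From HB Require Import structures.
From mathcomp Require Import all_boot all_order all_algebra complex.
From mathcomp Require Import all_classical all_reals all_analysis.
Import numFieldTopology.Exports numFieldNormedType.Exports.
Import Order.TTheory GRing.Theory Num.Theory.

Set Implicit Arguments.
Unset Strict Implicit.
Unset Printing Implicit Defensive.

Local Open Scope classical_set_scope.
Local Open Scope ring_scope.

Definition Cplx (R : realType) : numClosedFieldType := R[i].

Definition PH (R : realType) (A : set (Cplx R)) : set (Cplx R) :=
  A `|` [set z | exists w, ~ A w /\
           bounded_set (connected_component (~` A) w) /\
           connected_component (~` A) w z].

Definition poly_semigroup (R : realType) (G : set {poly Cplx R}) : Prop :=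
  (forall g, G g -> (1 < size g)%N) /\
  (forall g h, G g -> G h -> G (g \Po h)).

Definition crit_values (R : realType) (G : set {poly Cplx R}) : set (Cplx R) :=
  [set w | exists g z, G g /\ (g^`()).[z] = 0 /\ w = g.[z]].

(* P^*(G) = P(G) \ {oo}: the closure in C of the finite critical values. *)
Definition Pstar (R : realType) (G : set {poly Cplx R}) : set (Cplx R) :=
  closure (crit_values G).

(* The class \mathcal{G}: polynomial semigroups all of whose elements have
   degree >= 2 (size >= 3) and with P^*(G) bounded. *)
Definition in_class_G (R : realType) (G : set {poly Cplx R}) : Prop :=
  [/\ poly_semigroup G, (forall g, G g -> (2 < size g)%N) &
      bounded_set (Pstar G)].

(* Main.v *)
Require Import Defs.
From HB Require Import structures.
From mathcomp Require Import all_boot all_order all_algebra complex.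
From mathcomp Require Import all_classical all_reals all_analysis.
Import numFieldTopology.Exports numFieldNormedType.Exports.
Import Order.TTheory GRing.Theory Num.Theory.
Local Open Scope classical_set_scope.
Local Open Scope ring_scope.
Lemma cont_horner (K : numFieldType) (p : {poly K}) : continuous (fun z : K => p.[z]).
Proof.
elim/poly_ind: p => [|p c ih].
  by under eq_fun do rewrite horner0; exact: cst_continuous.
move=> x.
have -> : (fun z : K => (p * 'X + c%:P).[z]) = (fun z => p.[z]) \* id + cst c.
  by apply/funext => z; rewrite !hornerE.
apply: continuousD; last exact: cst_continuous.
apply: continuousM; [exact: ih| exact: cvg_id].
Qed.

Lemma image_closure (T U : topologicalType) (f : T -> U) (S : set T) :
  continuous f -> f @` closure S `<=` closure (f @` S).
Proof.
move=> cf _ [p Sp <-] B /cf fB.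
have [q [Sq Bq]] := Sp _ fB.
by exists (f q); split => //; exists q.
Qed.
Lemma poly_growth (K : numFieldType) (p : {poly K}) : (1 < size p)%N ->
  forall z : K, 1 <= `|z| ->
  `|lead_coef p| * `|z| - \sum_(i < (size p).-1) `|p`_i| <= `|p.[z]|.
Proof.
move=> sp z z1.
set n := (size p).-1.
set S := \sum_(i < n) `|p`_i|.
have En : size p = n.+1 by rewrite /n; case: (size p) sp.
have n1 : n = n.-1.+1 by rewrite /n; case: (size p) sp => // -[|k].
have z0 : 0 <= `|z| by [].
have S0 : 0 <= S by apply: sumr_ge0 => i _.
have lc : lead_coef p = p`_n by rewrite lead_coefE.
have key : `|z| ^+ n.-1 * (`|lead_coef p| * `|z| - S) <= `|p.[z]|.
  rewrite horner_coef En big_ord_recr /= addrC -lc.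
  apply: le_trans (lerB_normD _ _).
  rewrite mulrBr normrM normrX; apply: lerB.
    by rewrite mulrCA -exprSr -n1 mulrC.
  apply: le_trans (ler_norm_sum _ _ _) _.
  rewrite /S mulr_sumr; apply: ler_sum => i _.
  rewrite normrM normrX mulrC; apply: ler_wpM2r => //.
  apply: ler_weXn2l => //.
  have := ltn_ord i; rewrite {2}n1 ltnS; exact.
have xr : `|lead_coef p| * `|z| - S \is Num.real.
  by apply: realB; [apply: realM|]; apply: ger0_real.
have [h|h] := boolP (0 <= `|lead_coef p| * `|z| - S).
  apply: le_trans key; rewrite -[X in X <= _]mul1r; apply: ler_wpM2r => //.
  exact: exprn_ege1.
apply: le_trans (normr_ge0 _); apply: ltW.
by rewrite real_ltNge // real0.
Qed.
Lemma bounded_preimage (K : numFieldType) (p : {poly K}) (U : set K) :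
  (1 < size p)%N -> bounded_set ((fun z => p.[z]) @` U) -> bounded_set U.
Proof.
move=> sp /pinfty_ex_gt0 [M M0 HM].
set S := \sum_(i < (size p).-1) `|p`_i|.
set c := `|lead_coef p|.
have S0 : 0 <= S by apply: sumr_ge0 => i _.
have c0 : 0 < c.
  rewrite /c normr_gt0 lead_coef_eq0 -size_poly_eq0.
  by case: (size p) sp.
set B := 1 + (M + S) / c.
have B1 : 0 <= (M + S) / c.
  by apply: divr_ge0 => //; [apply: addr_ge0 => //; apply: ltW|apply: ltW].
have Br : B \is Num.real by apply: ger0_real; apply: addr_ge0.
apply: filterS (nbhs_pinfty_ge Br) => N BN u Uu /=.
apply: le_trans BN.
have [h|h] := boolP (`|u| <= 1).
  by apply: le_trans h _; rewrite lerDl.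
have hu : 1 <= `|u|.
  by apply: ltW; rewrite real_ltNge ?real1 ?normr_real.
have := @poly_growth _ p sp u hu.
have := HM _ (ex_intro2 _ _ u Uu erefl) => /= hM hg.
have : c * `|u| - S <= M := le_trans hg hM.
rewrite lerBlDr -ler_pdivlMl // => hu'.
apply: le_trans hu' _; rewrite /B mulrC -subr_ge0 addrK; exact: ler01.
Qed.

Lemma bounded_sub (K : numFieldType) (U V : set K) :
  U `<=` V -> bounded_set V -> bounded_set U.
Proof.
move=> UV HV; change (\forall M \near +oo, globally U [set x | `|x| <= M]).
have HV' : \forall M \near +oo, globally V [set x | `|x| <= M] := HV.
apply: filterS HV' => M HM x /UV; apply: HM.
Qed.

Lemma part1 (R : realType) (g : {poly Cplx R}) (A B : set (Cplx R)) :
      (1 < size g)%N -> B `<=` PH A ->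
      (fun z => g.[z]) @` B `<=` B ->
      B `<=` PH ((fun z => g.[z]) @^-1` A).
Proof.
move=> sg BA gB z Bz.
set f := fun z => g.[z].
have [Az|nAz] := pselect (A (f z)); first by left.
right; exists z; split => //; split; last exact: connected_component_refl.
have Bgz : B (f z) by apply: gB; exists z.
case: (BA _ Bgz) => [//|[w [nAw [bw cw]]]].
apply: (@bounded_preimage _ g (connected_component (~` (f @^-1` A)) z) sg).
apply: (@bounded_sub _ _ (connected_component (~` A) w)) bw.
rewrite (same_connected_component cw).
apply: connected_component_max.
- by exists z => //; exact: connected_component_refl.
- by move=> _ [u /connected_component_sub hu <-].
- apply: connected_continuous_connected; first exact: component_connected.
  exact/continuous_subspaceT/cont_horner.
Qed.

Theorem lemma2p5 (R : realType) :
  (forall (g : {poly Cplx R}) (A B : set (Cplx R)),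
      (1 < size g)%N -> compact A -> B `<=` PH A ->
      (fun z => g.[z]) @` B `<=` B ->
      B `<=` PH ((fun z => g.[z]) @^-1` A))
  /\
  (forall (G : set {poly Cplx R}) (g : {poly Cplx R}) (A : set (Cplx R)),
      in_class_G G -> G g -> compact A -> Pstar G `<=` PH A ->
      Pstar G `<=` PH ((fun z => g.[z]) @^-1` A)).
Proof.
split.
  by move=> g A B sg _; exact: part1.
move=> G g A [[sG cG] _ _] Gg _ PA.
apply: part1 => //; first exact: sG.
move=> y hy.
have H1 := @image_closure _ _ (fun z => g.[z]) (crit_values G) (@cont_horner _ g) y hy.
apply: (@closureS _ _ (crit_values G) _ _ H1) => _ [w [h [z [Gh [hz ->]]]] <-].
exists (g \Po h), z; split; first exact: cG.
by rewrite deriv_comp hornerM hz mulr0 horner_comp.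
Qed.
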